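(* Let $\varphi$ be any forecasting system and $\omega\in\Omega$. Then $\omega$ is Schnorr random for $\varphi$ if and only if there is no recursive, positive, rational-valued test supermartingale $R$ for $\varphi$ and growth function $\rho$ with $\limsup_{n\to\infty}[R(\omega^n)-\rho(n)]>0$.
   Context: Notation: $\mathbb N_0=\{0,1,\dots\}$; $\Omega=\{0,1\}^{\mathbb N}$; $\mathbb S$ finite binary strings, $\square$ empty string, $\omega^n$ first $n$ entries of $\omega$. $\mathcal I$: nonempty closed subintervals of $[0,1]$; $\overline E_I(f)=\max_{p\in I}[pf(1)+(1-p)f(0)]$. Forecasting system: any $\varphi:\mathbb S\to\mathcal I$. Supermartingale for $\varphi$: $M:\mathbb S\to\mathbb R$ with $\overline E_{\varphi(s)}(M(s\,\cdot))\le M(s)$ for all $s$ ($M(s\,\cdot):x\mapsto M(sx)$); test supermartingale: non-negative with $M(\square)=1$. A real map $r:\mathbb S\to\mathbb R$ is computable if there is a recursive $q:\mathbb S\times\mathbb N_0\to\mathbb Q$ with $|r(s)-q(s,N)|\le2^{-N}$; a rational-valued process is recursive if it is a recursive map $\mathbb S\to\mathbb Q$. A growth function is a recursive, non-decreasing, unbounded $\rho:\mathbb N_0\to\mathbb N_0$. $\omega$ is Schnorr random for $\varphi$ if $\limsup_n[T(\omega^n)-\rho(n)]\le0$ for all computable test supermartingales $T$ for $\varphi$ and all growth functions $\rho$. *)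

(* Defs.v *)
From Stdlib Require Import Reals QArith Qreals List Lia.
From Coquelicot Require Import Coquelicot.
Open Scope R_scope.

Definition bstring := list bool.
(* Omega = {0,1}^N, with true = 1, false = 0. *)
Definition outcome_seq := nat -> bool.
Definition prefix (omega : outcome_seq) (n : nat) : bstring :=
  map omega (seq 0 n).

Record interval := mkInterval {
  lo : R; hi : R;
  lo_ge0 : 0 <= lo; lo_le_hi : lo <= hi; hi_le1 : hi <= 1 }.

Definition forecasting_system := bstring -> interval.

(* Upper expectation over I of f : {0,1} -> R is max_{p in I} [p f(1) + (1-p) f(0)];
   "upper expectation <= c" is stated as: every p in I gives value <= c. *)
Definition upper_exp_le (I : interval) (f1 f0 c : R) : Prop :=
  forall p, lo I <= p <= hi I -> p * f1 + (1 - p) * f0 <= c.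

Definition supermartingale (phi : forecasting_system) (M : bstring -> R) : Prop :=
  forall s, upper_exp_le (phi s) (M (s ++ true :: nil)) (M (s ++ false :: nil)) (M s).

Definition test_supermartingale (phi : forecasting_system) (M : bstring -> R) : Prop :=
  supermartingale phi M /\ (forall s, 0 <= M s) /\ M nil = 1.

Inductive code : Type :=
  | CZero : code
  | CSucc : code
  | CProj : nat -> code
  | CComp : code -> list code -> code
  | CPrec : code -> code -> code
  | CMin  : code -> code.

Inductive eval : code -> list nat -> nat -> Prop :=
  | ev_zero : forall xs, eval CZero xs 0%nat
  | ev_succ : forall x xs, eval CSucc (x :: xs) (S x)
  | ev_proj : forall (i : nat) (xs : list nat), (i < length xs)%nat -> eval (CProj i) xs (nth i xs 0%nat)
  | ev_comp : forall f gs xs ys y,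
      evals gs xs ys -> eval f ys y -> eval (CComp f gs) xs y
  | ev_prec0 : forall f g xs y, eval f xs y -> eval (CPrec f g) (0%nat :: xs) y
  | ev_precS : forall f g n xs y z,
      eval (CPrec f g) (n :: xs) y -> eval g (n :: y :: xs) z ->
      eval (CPrec f g) (S n :: xs) z
  | ev_min : forall f xs y,
      eval f (y :: xs) 0%nat ->
      (forall z, (z < y)%nat -> exists k, eval f (z :: xs) (S k)) ->
      eval (CMin f) xs y
with evals : list code -> list nat -> list nat -> Prop :=
  | evs_nil : forall xs, evals nil xs nil
  | evs_cons : forall g gs xs y ys,
      eval g xs y -> evals gs xs ys -> evals (g :: gs) xs (y :: ys).

Fixpoint enc_str (s : bstring) : nat :=
  match s with
  | nil => 0%nat
  | b :: s' => (2 * enc_str s' + (if b then 2 else 1))%nat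
  end.

Definition cantor_pair (a b : nat) : nat := ((a + b) * (a + b + 1) / 2 + b)%nat.

Definition enc_Z (z : Z) : nat :=
  match z with
  | Z0 => 0%nat
  | Zpos p => (2 * Pos.to_nat p)%nat
  | Zneg p => (2 * Pos.to_nat p - 1)%nat
  end.

Definition enc_Q (q : Q) : nat :=
  cantor_pair (enc_Z (Qnum q)) (Pos.to_nat (Qden q) - 1)%nat.

Definition recursive_SQ (q : bstring -> Q) : Prop :=
  exists c, forall s, eval c (enc_str s :: nil) (enc_Q (q s)).

Definition recursive_SNQ (q : bstring -> nat -> Q) : Prop :=
  exists c, forall s N, eval c (enc_str s :: N :: nil) (enc_Q (q s N)).

Definition recursive_NN (f : nat -> nat) : Prop :=
  exists c, forall n, eval c (n :: nil) (f n).

Definition computable_real_map (r : bstring -> R) : Prop :=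
  exists q : bstring -> nat -> Q, recursive_SNQ q /\
    forall s N, Rabs (r s - Q2R (q s N)) <= / 2 ^ N.

Definition growth_function (rho : nat -> nat) : Prop :=
  recursive_NN rho /\
  (forall m n, (m <= n)%nat -> (rho m <= rho n)%nat) /\
  (forall B, exists n, (B < rho n)%nat).

Definition schnorr_random (phi : forecasting_system) (omega : outcome_seq) : Prop :=
  forall (T : bstring -> R) (rho : nat -> nat),
    test_supermartingale phi T -> computable_real_map T -> growth_function rho ->
    Rbar_le (LimSup_seq (fun n => T (prefix omega n) - INR (rho n))) 0.

(* Main.v *)
Require Import Defs.
From Stdlib Require Import Reals QArith Qreals List.
From Coquelicot Require Import Coquelicot.
From Stdlib Require Import Lia Lra ZArith.
Open Scope R_scope.

Module Codes.
Open Scope nat_scope.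

Fixpoint parf n := match n with 0 => 0 | S k => 1 - parf k end.
Fixpoint halff n := match n with 0 => 0 | S k => halff k + parf k end.
Fixpoint trif w := match w with 0 => 0 | S k => trif k + S k end.

Lemma parf_le n : parf n <= 1.
Proof. destruct n; [cbn; lia|]. change (parf (S n)) with (1 - parf n). lia. Qed.
Lemma halff_spec n : 2 * halff n + parf n = n.
Proof. induction n; auto. change (halff (S n)) with (halff n + parf n). change (parf (S n)) with (1 - parf n). pose proof (parf_le n). lia. Qed.

Lemma ev_comp2 op k1 k2 xs v1 v2 r :
  eval k1 xs v1 -> eval k2 xs v2 -> eval op (v1 :: v2 :: nil) r ->
  eval (CComp op (k1 :: k2 :: nil)) xs r.
Proof. intros. econstructor; [|eassumption]. repeat econstructor; eauto. Qed.
Lemma ev_comp1 op k1 xs v1 r :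
  eval k1 xs v1 -> eval op (v1 :: nil) r ->
  eval (CComp op (k1 :: nil)) xs r.
Proof. intros. econstructor; [|eassumption]. repeat econstructor; eauto. Qed.
Lemma ev_p0 x xs : eval (CProj 0) (x :: xs) x.
Proof. apply (ev_proj 0 (x :: xs)). simpl; lia. Qed.
Lemma ev_p1 x y xs : eval (CProj 1) (x :: y :: xs) y.
Proof. apply (ev_proj 1 (x :: y :: xs)). simpl; lia. Qed.
Lemma ev_p2 x y z xs : eval (CProj 2) (x :: y :: z :: xs) z.
Proof. apply (ev_proj 2 (x :: y :: z :: xs)). simpl; lia. Qed.
Lemma ev_S1 k xs v : eval k xs v -> eval (CComp CSucc (k :: nil)) xs (S v).
Proof. intros. eapply ev_comp1; eauto. constructor. Qed.

Definition addc := CPrec (CProj 0) (CComp CSucc (CProj 1 :: nil)).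
Lemma ev_add a b : eval addc (a :: b :: nil) (a + b).
Proof.
  induction a. apply ev_prec0, ev_p0.
  eapply ev_precS; [eassumption|]. apply ev_S1, ev_p1.
Qed.

Definition mulc := CPrec CZero (CComp addc (CProj 2 :: CProj 1 :: nil)).
Lemma ev_mul a b : eval mulc (a :: b :: nil) (a * b).
Proof.
  induction a. apply ev_prec0, ev_zero.
  eapply ev_precS; [eassumption|]. eapply ev_comp2; [apply ev_p2|apply ev_p1|apply ev_add].
Qed.

Definition predc := CPrec CZero (CProj 0).
Lemma ev_pred a : eval predc (a :: nil) (a - 1).
Proof.
  induction a. apply ev_prec0, ev_zero.
  replace (S a - 1) with a by lia.
  eapply ev_precS; [eassumption|apply ev_p0].
Qed.

Definition subrc := CPrec (CProj 0) (CComp predc (CProj 1 :: nil)).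
Lemma ev_subr b a : eval subrc (b :: a :: nil) (a - b).
Proof.
  induction b. replace (a - 0) with a by lia. apply ev_prec0, ev_p0.
  replace (a - S b) with (a - b - 1) by lia.
  eapply ev_precS; [eassumption|]. eapply ev_comp1; [apply ev_p1|]. apply ev_pred.
Qed.
Definition subc := CComp subrc (CProj 1 :: CProj 0 :: nil).
Lemma ev_sub a b : eval subc (a :: b :: nil) (a - b).
Proof. eapply ev_comp2; [apply ev_p1|apply ev_p0|apply ev_subr]. Qed.

Definition onec := CComp CSucc (CZero :: nil).
Lemma ev_one xs : eval onec xs 1.
Proof. apply ev_S1, ev_zero. Qed.

Definition parc := CPrec CZero (CComp subc (onec :: CProj 1 :: nil)).
Lemma ev_par a : eval parc (a :: nil) (parf a).
Proof.
  induction a. apply ev_prec0, ev_zero.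
  eapply ev_precS; [eassumption|]. eapply ev_comp2; [apply ev_one|apply ev_p1|apply ev_sub].
Qed.

Definition halfc := CPrec CZero (CComp addc (CProj 1 :: CComp parc (CProj 0 :: nil) :: nil)).
Lemma ev_half a : eval halfc (a :: nil) (halff a).
Proof.
  induction a. apply ev_prec0, ev_zero.
  eapply ev_precS; [eassumption|]. eapply ev_comp2; [apply ev_p1| |apply ev_add].
  eapply ev_comp1; [apply ev_p0|apply ev_par].
Qed.

Definition tric := CPrec CZero (CComp addc (CProj 1 :: CComp CSucc (CProj 0 :: nil) :: nil)).
Lemma ev_tri a : eval tric (a :: nil) (trif a).
Proof.
  induction a. apply ev_prec0, ev_zero.
  eapply ev_precS; [eassumption|]. eapply ev_comp2; [apply ev_p1| |apply ev_add].
  apply ev_S1, ev_p0.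
Qed.

Lemma trif_mono a b : a <= b -> trif a <= trif b.
Proof. induction 1; simpl; lia. Qed.

Lemma trif_eq w : (w * (w + 1)) / 2 = trif w.
Proof.
  assert (H : w * (w + 1) = trif w * 2).
  { induction w; simpl; nia. }
  rewrite H. apply Nat.div_mul. lia.
Qed.

Lemma cantor_eq a b : cantor_pair a b = trif (a + b) + b.
Proof. unfold cantor_pair. rewrite trif_eq. lia. Qed.

(* minimisation for unpairing: f(w, x) = (x+1) - trif(w+1) *)
Definition unf := CComp subc (CComp CSucc (CProj 1 :: nil) ::
                        CComp tric (CComp CSucc (CProj 0 :: nil) :: nil) :: nil).
Lemma ev_unf w x : eval unf (w :: x :: nil) (S x - trif (S w)).
Proof.
  eapply ev_comp2; [apply ev_S1, ev_p1| |apply ev_sub].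
  eapply ev_comp1; [apply ev_S1, ev_p0|apply ev_tri].
Qed.
Lemma ev_unf' w x r : r = S x - trif (S w) -> eval unf (w :: x :: nil) r.
Proof. intros ->; apply ev_unf. Qed.
Definition wc := CMin unf.
Lemma ev_w a b : eval wc (cantor_pair a b :: nil) (a + b).
Proof.
  rewrite cantor_eq. constructor.
  - apply ev_unf'. change (trif (S (a+b))) with (trif (a+b) + S (a+b)). lia.
  - intros z Hz. exists (trif (a+b) + b - trif (S z)). 
    apply ev_unf'. assert (trif (S z) <= trif (a+b)) by (apply trif_mono; lia). lia.
Qed.
End Codes.
Import Codes.
Module Main1.
Open Scope nat_scope.

Definition mnum (z : Z) : nat := match z with Zpos p => Pos.to_nat p | _ => 0 end.

Definition Rq_of (q : bstring -> nat -> Q) (s : bstring) : Q :=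
  match s with nil => 1%Q | _ =>
    Qmake (Z.of_nat (mnum (Qnum (q s (enc_str s + 3))) * (enc_str s + 1)
                     + Pos.to_nat (Qden (q s (enc_str s + 3)))))
          (Pos.of_nat (2 * Pos.to_nat (Qden (q s (enc_str s + 3))) * (enc_str s + 1)))
  end.

Definition S1 k := CComp CSucc (k :: nil).
Definition C1 op k := CComp op (k :: nil).
Definition C2 op k1 k2 := CComp op (k1 :: k2 :: nil).

Section Main.
Variable c : code.
Definition Yc := C2 c (CProj 0) (S1 (S1 (S1 (CProj 0)))).
Definition Wc := C1 wc Yc.
Definition Bc := C2 subc Yc (C1 tric Wc).
Definition Ac := C2 subc Wc Bc.
Definition Mc := C2 mulc (C1 halfc Ac) (C2 subc onec (C1 parc Ac)).
Definition Dc := S1 Bc.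
Definition X1 := S1 (CProj 0).
Definition NUMc := C2 addc (C2 mulc Mc X1) Dc.
Definition DEN1c := C1 predc (C2 mulc (C2 addc Dc Dc) X1).
Definition Fc := C2 addc (C1 tric (C2 addc (C2 addc NUMc NUMc) DEN1c)) DEN1c.
Definition Outc := C2 addc (C2 mulc (S1 (S1 onec)) (C2 subc onec (CProj 0)))
                          (C2 mulc Fc (C2 subc onec (C2 subc onec (CProj 0)))).

Lemma ev_eq k xs v r : eval k xs v -> v = r -> eval k xs r.
Proof. intros; subst; auto. Qed.

Lemma mnum_half z : halff (enc_Z z) * (1 - parf (enc_Z z)) = mnum z.
Proof.
  pose proof (halff_spec (enc_Z z)) as H. pose proof (parf_le (enc_Z z)).
  destruct z as [|p|p]; cbn [enc_Z mnum] in *.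
  - lia.
  - assert (0 < Pos.to_nat p) by lia. nia.
  - assert (0 < Pos.to_nat p) by lia. assert (Hp : parf (2 * Pos.to_nat p - 1) = 1) by lia.
    rewrite Hp. lia.
Qed.

Lemma enc_Z_of_nat n : 0 < n -> enc_Z (Z.of_nat n) = 2 * n.
Proof. intros. destruct n. lia. simpl. rewrite SuccNat2Pos.id_succ. reflexivity. Qed.

Hypothesis q : bstring -> nat -> Q.
Hypothesis Hc : forall s N, eval c (enc_str s :: N :: nil) (enc_Q (q s N)).

Lemma ev_Out s : eval Outc (enc_str s :: nil) (enc_Q (Rq_of q s)).
Proof.
  set (x := enc_str s).
  set (qs := q s (x + 3)).
  set (zn := enc_Z (Qnum qs)).
  set (b := Pos.to_nat (Qden qs) - 1).
  assert (HY : eval Yc (x :: nil) (cantor_pair zn b)).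
  { eapply ev_comp2; [apply ev_p0|apply ev_S1, ev_S1, ev_S1, ev_p0|].
    replace (S (S (S x))) with (x + 3) by lia. apply Hc. }
  assert (HW : eval Wc (x :: nil) (zn + b)) by (eapply ev_comp1; [apply HY|apply ev_w]).
  assert (HB : eval Bc (x :: nil) b).
  { eapply ev_eq. eapply ev_comp2; [apply HY| eapply ev_comp1; [apply HW|apply ev_tri]|apply ev_sub].
    rewrite cantor_eq. lia. }
  assert (HA : eval Ac (x :: nil) zn).
  { eapply ev_eq. eapply ev_comp2; [apply HW|apply HB|apply ev_sub]. lia. }
  assert (HM : eval Mc (x :: nil) (mnum (Qnum qs))).
  { eapply ev_eq. eapply ev_comp2; [eapply ev_comp1; [apply HA|apply ev_half]
       | eapply ev_comp2; [apply ev_one|eapply ev_comp1; [apply HA|apply ev_par]|apply ev_sub]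
       | apply ev_mul]. apply mnum_half. }
  assert (HD : eval Dc (x :: nil) (S b)) by (apply ev_S1, HB).
  assert (HX : eval X1 (x :: nil) (S x)) by (apply ev_S1, ev_p0).
  set (NUM := mnum (Qnum qs) * S x + S b).
  assert (HN : eval NUMc (x :: nil) NUM).
  { eapply ev_comp2; [eapply ev_comp2; [apply HM|apply HX|apply ev_mul]|apply HD|apply ev_add]. }
  set (DEN1 := (S b + S b) * S x - 1).
  assert (HD1 : eval DEN1c (x :: nil) DEN1).
  { eapply ev_comp1; [|apply ev_pred]. eapply ev_comp2; [|apply HX|apply ev_mul].
    eapply ev_comp2; [apply HD|apply HD|apply ev_add]. }
  assert (HF : eval Fc (x :: nil) (trif ((NUM + NUM) + DEN1) + DEN1)).
  { eapply ev_comp2; [|apply HD1|apply ev_add]. eapply ev_comp1; [|apply ev_tri].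
    eapply ev_comp2; [|apply HD1|apply ev_add]. eapply ev_comp2; [apply HN|apply HN|apply ev_add]. }
  eapply ev_eq.
  { eapply ev_comp2; [|eapply ev_comp2; [apply HF|eapply ev_comp2; [apply ev_one|
        eapply ev_comp2; [apply ev_one|apply ev_p0|apply ev_sub]|apply ev_sub]|apply ev_mul]|apply ev_add].
    eapply ev_comp2; [apply ev_S1, ev_S1, ev_one| eapply ev_comp2; [apply ev_one|apply ev_p0|apply ev_sub]|apply ev_mul]. }
  destruct s as [|bb s'] eqn:Es.
  - simpl. rewrite Nat.mul_0_r. reflexivity.
  - assert (Hx : 1 <= x) by (unfold x; simpl; destruct bb; lia).
    replace (1 - x) with 0 by lia. replace (1 - 0) with 1 by lia.
    unfold Rq_of.
    assert (Hd : Pos.to_nat (Qden qs) = S b) by (unfold b; lia).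
    change (enc_str (bb :: s')) with x. change (q (bb :: s') (x + 3)) with qs.
    unfold enc_Q. cbn [Qnum Qden]. rewrite Hd.
    replace (mnum (Qnum qs) * (x + 1) + S b) with NUM by (unfold NUM; lia).
    rewrite enc_Z_of_nat by (unfold NUM; lia).
    rewrite Nat2Pos.id by lia.
    rewrite cantor_eq. unfold DEN1. replace (2 * S b * (x + 1) - 1) with ((S b + S b) * S x - 1) by lia.
    replace (2 * NUM) with (NUM + NUM) by lia. lia.
Qed.
End Main.
End Main1.
Import Main1.
Module Main2.
Open Scope R_scope.

Lemma enc_app s b : enc_str (s ++ b :: nil) =
  (enc_str s + 2 ^ (length s) * (if b then 2 else 1))%nat.
Proof. induction s as [|c s IH]; simpl. destruct b; reflexivity. rewrite IH. destruct c, b; lia. Qed.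

Lemma enc_bound s : (enc_str s + 2 <= 2 ^ (S (length s)))%nat.
Proof. induction s as [|c s IH]; simpl in *. lia. destruct c; lia. Qed.

Lemma enc_child s b : (3 * (enc_str s + 1) <= 2 * (enc_str (s ++ b :: nil) + 1))%nat.
Proof. rewrite enc_app. pose proof (enc_bound s). simpl in H. destruct b; lia. Qed.

Lemma pow2_ge n : INR n + 1 <= 2 ^ n.
Proof. induction n. simpl; lra. rewrite S_INR. simpl. pose proof (pos_INR n). lra. Qed.

Lemma Q2R_mk n d : (0 < d)%nat ->
  Q2R (Qmake (Z.of_nat n) (Pos.of_nat d)) = INR n / INR d.
Proof.
  intros Hd. unfold Q2R. cbn [Qnum Qden].
  rewrite <- INR_IZR_INZ. rewrite <- positive_nat_Z, <- INR_IZR_INZ, Nat2Pos.id by lia.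
  reflexivity.
Qed.

Definition aof (s : bstring) := / (INR (enc_str s) + 1).
Definition xof (q : bstring -> nat -> Q) (s : bstring) :=
  INR (mnum (Qnum (q s (enc_str s + 3)%nat))) / INR (Pos.to_nat (Qden (q s (enc_str s + 3)%nat))).

Lemma Rq_val q s : s <> nil -> Q2R (Rq_of q s) = (xof q s + aof s) / 2.
Proof.
  intros Hs. destruct s as [|b s']; [congruence|]. unfold Rq_of.
  set (s := b :: s'). fold s.
  rewrite Q2R_mk by lia.
  unfold xof, aof.
  set (m := mnum _). set (d := Pos.to_nat _). set (x := enc_str s).
  assert (0 < INR d) by (apply lt_0_INR; unfold d; lia).
  assert (0 <= INR x) by apply pos_INR.
  rewrite !plus_INR, !mult_INR. simpl INR. replace (INR (x + 1)) with (INR x + 1) by (rewrite plus_INR; simpl; ring). field. lra.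
Qed.

Lemma xof_prop q s t : 0 <= t ->
  0 <= xof q s /\ Rabs (xof q s - t) <= Rabs (Q2R (q s (enc_str s + 3)%nat) - t).
Proof.
  intros Ht. unfold xof. set (qs := q s (enc_str s + 3)%nat).
  assert (Hd : 0 < INR (Pos.to_nat (Qden qs))) by (apply lt_0_INR; lia).
  assert (HQ : Q2R qs = IZR (Qnum qs) / INR (Pos.to_nat (Qden qs))).
  { unfold Q2R. rewrite <- positive_nat_Z, <- INR_IZR_INZ. reflexivity. }
  rewrite HQ. destruct (Qnum qs) as [|p|p]; cbn [mnum].
  - simpl. unfold Rdiv. rewrite Rmult_0_l. split; lra.
  - rewrite <- positive_nat_Z, <- INR_IZR_INZ. split; [|lra].
    unfold Rdiv. apply Rmult_le_pos; [apply pos_INR|left; apply Rinv_0_lt_compat; lra].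
  - simpl INR. unfold Rdiv at 1. rewrite Rmult_0_l. split; [lra|].
    assert (IZR (Zneg p) / INR (Pos.to_nat (Qden qs)) < 0).
    { apply Rdiv_neg_pos; [apply IZR_lt; lia|lra]. }
    rewrite !Rabs_left1; lra.
Qed.
End Main2.
Import Main2.
Module Main3.
Open Scope R_scope.

Lemma aof_pos s : 0 < aof s.
Proof. unfold aof. apply Rinv_0_lt_compat. pose proof (pos_INR (enc_str s)). lra. Qed.

Lemma aof_nil : aof nil = 1.
Proof. unfold aof. simpl. rewrite Rplus_0_l. apply Rinv_1. Qed.

Lemma aof_child s b : aof (s ++ b :: nil) <= 2/3 * aof s.
Proof.
  unfold aof. pose proof (enc_child s b) as H. apply le_INR in H.
  rewrite !mult_INR, !plus_INR in H. simpl in H.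
  pose proof (pos_INR (enc_str s)).
  replace (2/3 * / (INR (enc_str s) + 1)) with (/ (3/2 * (INR (enc_str s) + 1))).
  apply Rinv_le_contravar; lra.
  field. lra.
Qed.

Lemma Rabs_both u e : Rabs u <= e -> - e <= u <= e.
Proof. intros H. split; [pose proof (Rle_abs (-u)); rewrite Rabs_Ropp in H0|pose proof (Rle_abs u)]; lra. Qed.

Section Ana.
Variable phi0 : forecasting_system.
Variable T : bstring -> R.
Variable q : bstring -> nat -> Q.
Hypothesis HT : test_supermartingale phi0 T.
Hypothesis Happ : forall s N, Rabs (T s - Q2R (q s N)) <= / 2 ^ N.

Definition Rv s := Q2R (Rq_of q s).

Lemma err_bound s : Rabs (xof q s - T s) <= aof s / 8 /\ 0 <= xof q s.
Proof.
  destruct HT as [_ [Hpos _]].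
  destruct (xof_prop q s (T s) (Hpos s)) as [H0 H1]. split; [|exact H0].
  eapply Rle_trans; [apply H1|]. rewrite Rabs_minus_sym. eapply Rle_trans; [apply Happ|].
  unfold aof. pose proof (pow2_ge (enc_str s)). pose proof (pos_INR (enc_str s)).
  rewrite pow_add. simpl (2 ^ 3).
  unfold Rdiv. rewrite <- Rinv_mult. apply Rinv_le_contravar; lra.
Qed.

Lemma Rv_bounds s : s <> nil ->
  (T s + 7/8 * aof s) / 2 <= Rv s <= (T s + 9/8 * aof s) / 2.
Proof.
  intros Hs. unfold Rv. rewrite Rq_val by exact Hs.
  destruct (err_bound s) as [H _]. apply Rabs_both in H. lra.
Qed.

Lemma Rv_nil : Rv nil = 1.
Proof. unfold Rv. simpl. unfold Q2R. simpl. lra. Qed.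

Lemma Rv_half s : T s / 2 <= Rv s.
Proof.
  destruct s as [|b s'].
  - rewrite Rv_nil. destruct HT as [_ [_ H1]]. rewrite H1. lra.
  - pose proof (Rv_bounds (b :: s') ltac:(discriminate)). pose proof (aof_pos (b :: s')). lra.
Qed.

Lemma Rv_pos s : 0 < Rv s.
Proof.
  destruct s as [|b s'].
  - rewrite Rv_nil. lra.
  - unfold Rv. rewrite Rq_val by discriminate. destruct (err_bound (b :: s')) as [_ H].
    pose proof (aof_pos (b :: s')). lra.
Qed.

Lemma Rv_super : supermartingale phi0 Rv.
Proof.
  intros s p Hp. destruct HT as [HS [Hpos H1]].
  pose proof (HS s p Hp) as Hs.
  pose proof (lo_ge0 (phi0 s)). pose proof (hi_le1 (phi0 s)).
  assert (A1 := Rv_bounds (s ++ true :: nil) ltac:(destruct s; discriminate)).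
  assert (A0 := Rv_bounds (s ++ false :: nil) ltac:(destruct s; discriminate)).
  pose proof (aof_child s true). pose proof (aof_child s false).
  pose proof (aof_pos s).
  assert (p * Rv (s ++ true :: nil) + (1 - p) * Rv (s ++ false :: nil) <=
          (T s + 3/4 * aof s) / 2).
  { assert (p * Rv (s ++ true :: nil) <= p * ((T (s ++ true :: nil) + 9/8 * (2/3 * aof s)) / 2))
      by (apply Rmult_le_compat_l; lra).
    assert ((1-p) * Rv (s ++ false :: nil) <= (1-p) * ((T (s ++ false :: nil) + 9/8 * (2/3 * aof s)) / 2))
      by (apply Rmult_le_compat_l; lra).
    nra. }
  destruct s as [|b s'].
  - rewrite Rv_nil, H1, aof_nil in *. lra.
  - pose proof (Rv_bounds (b :: s') ltac:(discriminate)). lra.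
Qed.
End Ana.
End Main3.
Import Main3.

Lemma halff_mono m n : (m <= n)%nat -> (halff m <= halff n)%nat.
Proof. intros. pose proof (halff_spec m). pose proof (halff_spec n).
  pose proof (parf_le m). pose proof (parf_le n). lia. Qed.

Theorem proposition4p4 (phi : forecasting_system) (omega : outcome_seq) :
  schnorr_random phi omega <->
  ~ (exists (Rq : bstring -> Q) (rho : nat -> nat),
       recursive_SQ Rq /\
       (forall s, 0 < Q2R (Rq s)) /\
       test_supermartingale phi (fun s => Q2R (Rq s)) /\
       growth_function rho /\
       Rbar_lt 0 (LimSup_seq (fun n => Q2R (Rq (prefix omega n)) - INR (rho n)))).
Proof.
  split.
  - intros H [Rq [rho [[c Hc] [_ [HT [Hg HL]]]]]].
    assert (Hcm : computable_real_map (fun s => Q2R (Rq s))).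
    { exists (fun s _ => Rq s). split.
      - exists (CComp c (CProj 0 :: nil)). intros s N. eapply ev_comp1; [apply ev_p0|apply Hc].
      - intros s N. rewrite Rminus_diag, Rabs_R0. left. apply Rinv_0_lt_compat, pow_lt. lra. }
    pose proof (H _ _ HT Hcm Hg) as H1.
    eapply Rbar_lt_not_le; eassumption.
  - intros Hno T rho HT [q [[c Hc] Happ]] Hg.
    destruct (Rbar_le_lt_dec (LimSup_seq (fun n => T (prefix omega n) - INR (rho n))) 0) as [Hle|Hlt];
      [exact Hle|exfalso; apply Hno].
    destruct Hg as [[cr Hcr] [Hmono Hunb]].
    exists (Rq_of q), (fun n => halff (rho n)).
    split; [exists (Outc c); intros s; apply ev_Out; exact Hc|].
    split; [intros s; apply (Rv_pos phi T q HT Happ)|].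
    split.
    { split; [apply (Rv_super phi T q HT Happ)|]. split.
      - intros s. left. apply (Rv_pos phi T q HT Happ).
      - apply Rv_nil. }
    split.
    { split; [|split].
      - exists (CComp halfc (cr :: nil)). intros n. eapply ev_comp1; [apply Hcr|apply ev_half].
      - intros m n Hmn. apply halff_mono, Hmono, Hmn.
      - intros B. destruct (Hunb (2 * B + 1)%nat) as [n Hn]. exists n.
        pose proof (halff_spec (rho n)). pose proof (parf_le (rho n)). lia. }
    set (u := fun n => T (prefix omega n) - INR (rho n)) in *.
    assert (Hs : Rbar_le (LimSup_seq (fun n => / 2 * u n))
                   (LimSup_seq (fun n => Q2R (Rq_of q (prefix omega n)) - INR (halff (rho n))))).
    { apply LimSup_le. exists 0%nat. intros n _. unfold u.
      pose proof (Rv_half phi T q HT Happ (prefix omega n)). unfold Rv in H.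
      pose proof (halff_spec (rho n)) as Hh. 
      assert (2 * INR (halff (rho n)) <= INR (rho n)).
      { replace 2 with (INR 2) by (simpl; lra). rewrite <- mult_INR. apply le_INR. lia. }
      lra. }
    rewrite (is_LimSup_seq_unique _ _ (is_LimSup_seq_scal_pos (/2) u _ ltac:(lra) (proj2_sig (ex_LimSup_seq u)))) in Hs.
    change (proj1_sig (ex_LimSup_seq u)) with (LimSup_seq u) in Hs.
    destruct (LimSup_seq u) as [l| |]; simpl in Hlt, Hs |- *.
    + destruct (LimSup_seq _) as [l'| |]; simpl in *; try tauto. lra.
    + destruct (Rle_dec 0 (/2)) as [H0|H0]; [|lra]. destruct (Rle_lt_or_eq_dec 0 (/2) H0); [|lra].
      destruct (LimSup_seq _); simpl in *; tauto.
    + tauto.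
Qed.
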